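(* Let $G$ be a connected finite simple graph on $[n]$ and let $S:=\{\ker x_1,\dots,\ker x_n,\ker(x_1+\dots+x_n)\}\subseteq\mathcal{A}_G$. Then $\langle S\rangle_{\mathcal{A}_G}=\mathcal{A}_G$. In particular, $\mathcal{A}_G$ is projectively unique over $\mathbb{Q}$.
   Context: Let $G=(N,E)$ be a finite simple graph with vertex set $N=[n]=\{1,\dots,n\}$. For $\varnothing\neq I\subseteq N$, $G[I]$ denotes the induced subgraph on $I$, and $H_I:=\ker\big(\sum_{i\in I}x_i\big)$, where $x_1,\dots,x_n$ are the coordinate functions on $\mathbb{Q}^n$. The connected subgraph arrangement is $\mathcal{A}_G:=\{H_I\mid \varnothing\neq I\subseteq N,\ G[I]\text{ connected}\}$. $L(\mathcal{A})$ is the set of intersections of subsets of $\mathcal{A}$, ordered by reverse inclusion. For $\varnothing\neq S\subseteq\mathcal{A}$: $\mathrm{Gen}_0(\mathcal{A},S):=S$, $\mathrm{Gen}_{i+1}(\mathcal{A},S):=\{H\in\mathcal{A}\mid \exists\, J\subseteq L(\mathrm{Gen}_i(\mathcal{A},S)),\ H=\sum_{X\in J}X\}$, and $\langle S\rangle_{\mathcal{A}}:=\bigcup_{i\ge0}\mathrm{Gen}_i(\mathcal{A},S)$. Projectively unique means: every arrangement $\mathcal{C}$ in $\mathbb{Q}^n$ with $L(\mathcal{C})\cong L(\mathcal{A}_G)$ as posets equals $\varphi(\mathcal{A}_G)$ for some $\varphi\in\mathrm{GL}(\mathbb{Q}^n)$. *)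

(* Defs.v *)
From HB Require Import structures.
From mathcomp Require Import all_boot all_order all_algebra.
From mathcomp Require Import finmap.
Set Implicit Arguments.
Unset Strict Implicit.
Unset Printing Implicit Defensive.
Import Order.TTheory GRing.Theory Num.Theory.
Local Open Scope ring_scope.
Local Open Scope fset_scope.

(* The ambient space Q^n is the space of row vectors 'rV[rat]_n;
   the coordinate function x_i is  v |-> v ord0 i. *)
Notation Qn n := 'rV[rat]_n.
Notation subsp n := {vspace 'rV[rat]_n}.

Definition sumform n (I : {set 'I_n}) : 'Hom(Qn n, rat^o) :=
  linfun (fun v : Qn n => (\sum_(i in I) v ord0 i : rat^o)).

Definition HI n (I : {set 'I_n}) : subsp n := lker (sumform I).

Definition hyperplane n (H : subsp n) : Prop := \dim H = n.-1.

Definition arrangement n (A : {fset subsp n}) : Prop :=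
  forall H, H \in A -> hyperplane H.

Definition simple_graph n (e : rel 'I_n) : Prop := symmetric e /\ irreflexive e.

Definition induced_connected n (e : rel 'I_n) (I : {set 'I_n}) : bool :=
  [forall x in I, forall y in I,
    connect [rel u v | [&& u \in I, v \in I & e u v]] x y].

Definition graph_connected n (e : rel 'I_n) : Prop := induced_connected e setT.

Definition conn_sets n (e : rel 'I_n) : pred {set 'I_n} :=
  fun I => (I != set0) && induced_connected e I.

Definition AG n (e : rel 'I_n) : {fset subsp n} :=
  [fset HI I | I in conn_sets e].

(* L(P): the intersections of (finite) subsets of a family P of subspaces
   (the empty intersection being the whole space). *)
Definition inL n (P : subsp n -> Prop) (X : subsp n) : Prop :=
  exists B : {fset subsp n},
    (forall H, H \in B -> P H) /\ X = (\bigcap_(H <- B) H)%VS.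

Fixpoint Gen n (A S : {fset subsp n}) (i : nat) : subsp n -> Prop :=
  match i with
  | 0 => fun H => H \in S
  | i'.+1 => fun H => H \in A /\
      exists J : {fset subsp n},
        (forall X, X \in J -> inL (Gen A S i') X) /\ H = (\sum_(X <- J) X)%VS
  end.

Definition generated n (A S : {fset subsp n}) (H : subsp n) : Prop :=
  exists i, Gen A S i H.

(* L(C) and L(A) are isomorphic as posets (order = reverse inclusion). *)
Definition L_iso n (C A : {fset subsp n}) : Prop :=
  exists f : subsp n -> subsp n,
    [/\ (forall X, inL (fun H => H \in C) X -> inL (fun H => H \in A) (f X)),
        (forall X Y, inL (fun H => H \in C) X -> inL (fun H => H \in C) Y ->
           f X = f Y -> X = Y),
        (forall Z, inL (fun H => H \in A) Z ->
           exists2 X, inL (fun H => H \in C) X & f X = Z) &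
        (forall X Y, inL (fun H => H \in C) X -> inL (fun H => H \in C) Y ->
           ((Y <= X)%VS <-> (f Y <= f X)%VS))].

Definition mx_image n (M : 'M[rat]_n) (A : {fset subsp n}) : {fset subsp n} :=
  [fset (linfun (fun v : Qn n => v *m M) @: H)%VS | H in A].

Definition proj_unique n (A : {fset subsp n}) : Prop :=
  forall C : {fset subsp n}, arrangement C -> L_iso C A ->
    exists2 M : 'M[rat]_n, M \in unitmx & C = mx_image M A.

(* Main.v *)
Require Import Defs.
From HB Require Import structures.
From mathcomp Require Import all_boot all_order all_algebra.
From mathcomp Require Import finmap.
From mathcomp Require Import zify.
Set Implicit Arguments. Unset Strict Implicit. Unset Printing Implicit Defensive.
Import Order.TTheory GRing.Theory Num.Theory.
Local Open Scope ring_scope.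
Local Open Scope fset_scope.


Definition sumf n (I : {set 'I_n}) := fun v : Qn n => (\sum_(i in I) v ord0 i : rat^o).
Fact sumf_lin n I : linear (@sumf n I).
Proof. move=> a u v; rewrite /sumf /= scaler_sumr -big_split /=; apply: eq_bigr => i _; by rewrite !mxE. Qed.
HB.instance Definition _ n I := GRing.isLinear.Build rat (Qn n) rat^o _ (@sumf n I) (@sumf_lin n I).

Lemma memHI n (I : {set 'I_n}) v : (v \in HI I) = (\sum_(i in I) v ord0 i == 0).
Proof. by rewrite /HI memv_ker /sumform (lfunE (@sumf n I)). Qed.

Lemma memHE n (v : 'I_n) w : (w \in HI [set v]) = (w 0 v == 0).
Proof. by rewrite memHI big_set1. Qed.
Section Gen.
Variable n : nat.
Implicit Types (A S B J : {fset subsp n}) (H X Y : subsp n).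

Lemma mem_bigcap (s : seq (subsp n)) w :
  (w \in \bigcap_(H <- s) H)%VS = all (fun H => w \in H) s.
Proof. elim: s => [|H s IH]; rewrite ?big_nil ?memvf // big_cons memv_cap IH //. Qed.

Lemma sub_bigsum (s : seq (subsp n)) V :
  (\sum_(X <- s) X <= V)%VS = all (fun X => X <= V)%VS s.
Proof. elim: s => [|H s IH]; rewrite ?big_nil ?sub0v // big_cons subv_add IH //. Qed.

Lemma bigsum_sup (s : seq (subsp n)) X : X \in s -> (X <= \sum_(Y <- s) Y)%VS.
Proof.
elim: s => [//|H s IH]; rewrite inE big_cons => /orP[/eqP->|/IH]; first exact: addvSl.
by move=> h; apply: subv_trans h (addvSr _ _).
Qed.

Lemma sum_fset2 X Y : (\sum_(Z <- [fset X; Y]) Z = X + Y)%VS.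
Proof.
apply: subv_anti; apply/andP; split.
  rewrite sub_bigsum; apply/allP=> Z; rewrite in_fset2 => /orP[]/eqP->;
  [exact: addvSl | exact: addvSr].
by rewrite subv_add !bigsum_sup // in_fset2 eqxx ?orbT.
Qed.

Lemma Gen_A A S i H : {subset S <= A} -> Gen A S i H -> H \in A.
Proof. by case: i => [/= sSA /sSA|i _ []]. Qed.

Lemma Gen_succ A S i H : {subset S <= A} -> Gen A S i H -> Gen A S i.+1 H.
Proof.
move=> sSA GH; split; first exact: Gen_A GH.
exists [fset H]; split; last by rewrite big_seq_fset1.
move=> X; rewrite in_fset1 => /eqP->; exists [fset H]; split.
  by move=> Y; rewrite in_fset1 => /eqP->.
by rewrite big_seq_fset1.
Qed.

Lemma Gen_mono A S i j H : {subset S <= A} -> (i <= j)%N -> Gen A S i H -> Gen A S j H.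
Proof.
move=> sSA /subnK <-; elim: (j - i)%N => [//|k IH] /IH; rewrite addSn; exact: Gen_succ.
Qed.

End Gen.
Lemma key n (I : {set 'I_n}) v : v \in I ->
  HI (I :\ v) = (HI I :&: HI [set v] + \bigcap_(H <- [fset HI [set i] | i in I :\ v]) H)%VS.
Proof.
move=> vI; apply/vspaceP => w; apply/idP/idP.
  rewrite memHI => /eqP hw.
  pose a : Qn n := \row_i (if i \in I :\ v then w 0 i else 0).
  apply/memv_addP; exists a; last exists (w - a); last by rewrite addrC subrK.
    rewrite memv_cap (memHE v a) (memHI I a) (big_setD1 v vI).
    rewrite [a 0 v]mxE in_setD1 eqxx /= add0r eqxx andbT.
    apply/eqP; rewrite -[X in _ = X]hw.
    by apply: eq_big => // i iI; rewrite mxE iI.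
  rewrite mem_bigcap; apply/allP => H /imfsetP [i /= iI ->].
  by rewrite (memHE i) !mxE iI subrr.
case/memv_addP => u; rewrite memv_cap (memHE v u) (memHI I u) => /andP[/eqP hu /eqP uv].
move=> [z]; rewrite mem_bigcap => /allP hz ->.
have hz' : forall i, i \in I :\ v -> z 0 i = 0.
  move=> i iI; have := hz (HI [set i]); rewrite (memHE i z) => h; apply/eqP/h.
  by apply/imfsetP; exists i.
rewrite (memHI (I :\ v) (u + z)).
rewrite (big_setD1 v vI) /= uv add0r in hu.
apply/eqP; rewrite -[X in _ = X]hu.
by apply: eq_big => // i iI; rewrite mxE hz' // addr0.
Qed.
Section Graph.
Variables (n : nat) (e : rel 'I_n).

Lemma path_exit (R : rel 'I_n) (J : {set 'I_n}) x p :
  subrel R e -> path R x p -> x \in J -> last x p \notin J ->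
  exists u w, [/\ u \in J, w \notin J & e u w].
Proof.
move=> sRe; elim: p x => [|z p IH] x.
  by move=> _ /= xJ; rewrite xJ.
rewrite /=; case/andP=> Rxz pz xJ lz; case: (boolP (z \in J)) => zJ; first exact: IH pz zJ lz.
by exists x, z; split => //; apply: sRe.
Qed.

Lemma grow (J : {set 'I_n}) :
  symmetric e -> graph_connected e -> J != set0 -> induced_connected e J -> J != setT ->
  exists w, w \notin J /\ induced_connected e (w |: J).
Proof.
move=> esym gc /set0Pn [x xJ] cJ /eqP JT.
have [y yJ] : exists y, y \notin J.
  apply/existsP; apply: contra_notT JT => /existsPn h.
  by apply/setP => y; rewrite in_setT; move: (h y); rewrite negbK.
have := forallP gc x; rewrite in_setT => /= /forallP /(_ y); rewrite in_setT /=.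
case/connectP=> p pp ly.
have [u [w [uJ wJ euw]]] : exists u w, [/\ u \in J, w \notin J & e u w].
  by apply: (path_exit (p := p) _ pp xJ); [move=> a b /= /andP[_ /andP[]] | rewrite -ly].
exists w; split => //; apply/forallP => a; apply/implyP => aJ'; apply/forallP => b; apply/implyP => bJ'.
set R := [rel u v | [&& u \in J, v \in J & e u v]].
set R' := [rel u v | [&& u \in w |: J, v \in w |: J & e u v]].
have sub : forall a b, connect R a b -> connect R' a b.
  apply: connect_sub => c d /= /and3P[c1 d1 ecd]; apply: connect1.
  by rewrite /= !in_setU1 c1 d1 ecd !orbT.
have Ruw : R' u w by rewrite /= !in_setU1 uJ eqxx /= orbT.
have Rwu : R' w u by rewrite /= !in_setU1 uJ eqxx /= orbT esym.
have cJab : forall a b, a \in J -> b \in J -> connect R' a b.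
  move=> c d cJ0 dJ0; apply: sub.
  by have := forallP cJ c; rewrite cJ0 => /forallP /(_ d); rewrite dJ0.
move: aJ' bJ'; rewrite !in_setU1 => /orP[/eqP-> | aJ] /orP[/eqP-> | bJ].
- exact: connect0.
- by apply: (@connect_trans _ _ u); [apply: connect1 | apply: cJab].
- by apply: (@connect_trans _ _ u); [apply: cJab | apply: connect1].
- exact: cJab.
Qed.

End Graph.

Local Close Scope fset_scope.

Lemma dimQn n : \dim (fullv : subsp n) = n.
Proof. by rewrite dimvf /dim /= mul1n. Qed.

Lemma hyper_form n (K : subsp n) : (0 < n)%N -> \dim K = n.-1 ->
  exists a : 'cV[rat]_n, forall w, (w \in K) = ((w *m a) 0 0 == 0).
Proof.
move=> n0 dK.
set W := (K^C)%VS.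
have dW : \dim W = 1%N by rewrite /W dimv_compl dimQn dK; lia.
set u := vpick W.
have u0 : u != 0 by rewrite vpick0 -dimv_eq0 dW.
have Wu : W = <[u]>%VS.
  apply/eqP; rewrite eq_sym eqEdim -memvE memv_pick dim_vline u0 dW //.
set p := daddv_pi W K.
have WK : (W :&: K = 0)%VS by rewrite capvC capv_compl.
have KW : (K :&: W = 0)%VS by rewrite capv_compl.
have padd w : p w + daddv_pi K W w = w.
  by apply: daddv_pi_add => //; rewrite addvC addv_complf memvf.
have memK w : (w \in K) = (p w == 0).
  apply/idP/idP => [wK | /eqP pw0].
    have := padd w; rewrite daddv_pi_id // => h; apply/eqP; apply: (addIr w); by rewrite h add0r.
  by rewrite -(padd w) pw0 add0r memv_pi.
pose c w := coord [tuple u] 0 (p w).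
have pc w : p w = c w *: u.
  have : p w \in <[u]>%VS by rewrite -Wu memv_pi.
  have cu : coord [tuple u] 0 u = 1.
    by have := @coord_free _ _ 1 [tuple u] ord0 ord0; rewrite /= seq1_free u0 => /(_ isT).
  rewrite /c; case/vlineP => k ->; by rewrite linearZ /= cu mulr1.
exists (\col_j c (delta_mx 0 j)) => w.
rewrite memK pc scaler_eq0 (negbTE u0) orbF !mxE.
rewrite {1}(row_sum_delta w) /c !linear_sum /=.
congr (_ == 0); apply: eq_big => // j _; by rewrite !linearZ /= mxE.
Qed.

Local Open Scope fset_scope.

Lemma cap_fset2 n (X Y : subsp n) : (\bigcap_(H <- [fset X; Y]) H = X :&: Y)%VS.
Proof.
apply/vspaceP => w; rewrite mem_bigcap memv_cap; apply/allP/andP.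
  by move=> h; split; apply: h; rewrite in_fset2 eqxx ?orbT.
by case=> wX wY H; rewrite in_fset2 => /orP[]/eqP->.
Qed.

Section Part1.
Variables (n : nat) (e : rel 'I_n).
Hypotheses (n0 : (0 < n)%N) (sg : simple_graph e) (gc : graph_connected e).
Let S := [fset HI [set i] | i in 'I_n] `|` [fset HI [set: 'I_n]].

Lemma memAG I : conn_sets e I -> HI I \in AG e.
Proof. by move=> cI; apply/imfsetP; exists I. Qed.

Lemma conn1 (i : 'I_n) : conn_sets e [set i].
Proof.
apply/andP; split; first by apply/set0Pn; exists i; rewrite set11.
apply/forallP => x; apply/implyP; rewrite in_set1 => /eqP->.
apply/forallP => y; apply/implyP; rewrite in_set1 => /eqP->; exact: connect0.
Qed.

Lemma connT : conn_sets e [set: 'I_n].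
Proof.
apply/andP; split => //; apply/set0Pn; exists (Ordinal n0); by rewrite in_setT.
Qed.

Lemma S_sub : {subset S <= AG e}.
Proof.
move=> H; rewrite in_fsetU => /orP[/imfsetP [i _ ->]|]; first exact/memAG/conn1.
by rewrite in_fset1 => /eqP->; apply/memAG/connT.
Qed.

Lemma E_S (i : 'I_n) : HI [set i] \in S.
Proof. by rewrite in_fsetU; apply/orP; left; apply/imfsetP; exists i. Qed.

Lemma N_S : HI [set: 'I_n] \in S.
Proof. by rewrite in_fsetU in_fset1 eqxx orbT. Qed.

Lemma E_Gen (i : 'I_n) d : Gen (AG e) S d (HI [set i]).
Proof. by apply: (Gen_mono (i := 0)) => //; [exact: S_sub | exact: E_S]. Qed.

Lemma gen_all d (J : {set 'I_n}) : conn_sets e J -> (#|J| + d)%N = n -> Gen (AG e) S d (HI J).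
Proof.
elim: d J => [|d IH] J cJ.
  rewrite addn0 => cardJ.
  have -> : J = setT.
    by apply/eqP; rewrite eqEcard subsetT cardsT card_ord cardJ leqnn.
  exact: N_S.
move=> cardJ.
have JT : J != setT.
  apply/eqP => JT; move: cardJ; rewrite JT cardsT card_ord; lia.
case/andP: (cJ) => J0 icJ.
have [w [wJ cJ']] := grow sg.1 gc J0 icJ JT.
have cJ'' : conn_sets e (w |: J).
  by apply/andP; split => //; apply/set0Pn; exists w; rewrite setU11.
have := IH (w |: J) cJ''; rewrite cardsU1 wJ add1n addSnnS => /(_ cardJ) Gd.
split; first exact: (memAG cJ).
have := @key n (w |: J) w (setU11 w J).
rewrite (setU1K wJ) => ->.
exists [fset (HI (w |: J) :&: HI [set w])%VS;
        \bigcap_(H <- [fset HI [set i] | i in J]) H]%VS.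
split; last by rewrite sum_fset2.
move=> X; rewrite in_fset2 => /orP[]/eqP->.
  exists [fset HI (w |: J); HI [set w]]; split; last by rewrite cap_fset2.
  by move=> H; rewrite in_fset2 => /orP[]/eqP->; [exact: Gd | exact: E_Gen].
exists [fset HI [set i] | i in J]; split => //.
by move=> H /imfsetP [i _ ->]; exact: E_Gen.
Qed.

Lemma part1 H : generated (AG e) S H <-> H \in AG e.
Proof.
split; first by case=> i; apply: Gen_A; exact: S_sub.
case/imfsetP => I /= cI ->; exists (n - #|I|)%N; apply: gen_all => //.
have : (#|I| <= n)%N by rewrite -[X in (_ <= X)%N]card_ord max_card.
lia.
Qed.

End Part1.

Section Lat.
Variable n : nat.
Implicit Types (P Q : subsp n -> Prop) (B : {fset subsp n}) (X Y U V : subsp n).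

Lemma memcapP B w : reflect (forall H, H \in B -> w \in H) (w \in \bigcap_(H <- B) H)%VS.
Proof. rewrite mem_bigcap; exact: allP. Qed.

Lemma inL_full P : inL P fullv.
Proof. by exists fset0; split => //; rewrite big_seq_fset0. Qed.

Lemma inL_mem P X : P X -> inL P X.
Proof.
move=> PX; exists [fset X]; split; last by rewrite big_seq_fset1.
by move=> H; rewrite in_fset1 => /eqP->.
Qed.

Lemma inL_sub P Q X : (forall H, P H -> Q H) -> inL P X -> inL Q X.
Proof. by move=> PQ [B [BP ->]]; exists B; split => // H /BP /PQ. Qed.

Lemma inL_cap P X Y : inL P X -> inL P Y -> inL P (X :&: Y)%VS.
Proof.
move=> [B1 [P1 ->]] [B2 [P2 ->]]; exists (B1 `|` B2); split.
  by move=> H; rewrite in_fsetU => /orP[/P1|/P2].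
apply/vspaceP => w; rewrite memv_cap; apply/andP/memcapP.
  by case=> /memcapP h1 /memcapP h2 H; rewrite in_fsetU => /orP[/h1|/h2].
by move=> h; split; apply/memcapP => H HB; apply: h; rewrite in_fsetU HB ?orbT.
Qed.

Lemma hyp_eq X Y : (X <= Y)%VS -> \dim X = n.-1 -> Y != fullv -> X = Y.
Proof.
move=> XY dX YT; apply/eqP; rewrite eqEdim XY dX /=.
have : (\dim Y < n)%N.
  rewrite ltnNge; apply: contra YT => h; rewrite eqEdim subvf dimQn //.
lia.
Qed.

Lemma full_neq X : \dim X = n.-1 -> (0 < n)%N -> X != fullv.
Proof. by move=> dX n0; apply/eqP => XT; move: dX; rewrite XT dimQn; lia. Qed.

Lemma sumformE (I : {set 'I_n}) v : sumform I v = \sum_(i in I) v ord0 i :> rat.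
Proof. by rewrite /sumform (lfunE (sumf I)). Qed.

Lemma dimHI (I : {set 'I_n}) : I != set0 -> \dim (HI I) = n.-1.
Proof.
case/set0Pn => i iI.
have := limg_ker_dim (sumform I) fullv; rewrite capfv dimQn.
have : \dim (limg (sumform I)) = 1%N.
  apply/eqP; rewrite eqn_leq; apply/andP; split.
    by have := dimvS (subvf (limg (sumform I))); rewrite dimvf.
  rewrite lt0n dimv_eq0; apply/eqP => h.
  have : sumform I (delta_mx 0 i) \in limg (sumform I) by apply: memv_img; exact: memvf.
  rewrite h memv0 sumformE (big_setD1 i iI) /= mxE !eqxx /=.
  rewrite big1 ?addr0 ?oner_eq0 // => j; rewrite in_setD1 => /andP[ji _]; rewrite mxE eqxx /= (negbTE ji).
  done.
move=> -> h; rewrite /HI -subn1 -[X in _ = (X - 1)%N]h addnK; reflexivity.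
Qed.

End Lat.

Section Iso.
Variables (n : nat) (e : rel 'I_n).
Hypotheses (n0 : (0 < n)%N) (sg : simple_graph e) (gc : graph_connected e).
Variables (C : {fset subsp n}) (Carr : arrangement C) (f : subsp n -> subsp n).
Let LC := inL (fun H => H \in C).
Let LA := inL (fun H => H \in AG e).
Hypotheses (fLA : forall X, LC X -> LA (f X))
  (finj : forall X Y, LC X -> LC Y -> f X = f Y -> X = Y)
  (fsurj : forall Z, LA Z -> exists2 X, LC X & f X = Z)
  (fle : forall X Y, LC X -> LC Y -> ((Y <= X)%VS <-> (f Y <= f X)%VS)).

Lemma dimA H : H \in AG e -> \dim H = n.-1.
Proof. by case/imfsetP => I /= /andP[I0 _] ->; apply: dimHI. Qed.

Lemma LCf : LC fullv. Proof. exact: inL_full. Qed.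

Lemma f_full : f fullv = fullv.
Proof.
have [X LX fX] := fsurj (inL_full _).
apply: subv_anti; rewrite subvf /= -{1}fX; apply/(fle LCf LX); exact: subvf.
Qed.

Lemma f_cap X Y : LC X -> LC Y -> f (X :&: Y)%VS = (f X :&: f Y)%VS.
Proof.
move=> LX LY; have LXY := inL_cap LX LY.
apply: subv_anti; apply/andP; split.
  rewrite subv_cap; apply/andP; split; apply/(fle _ LXY) => //; [exact: capvSl | exact: capvSr].
have [W LW fW] := fsurj (inL_cap (fLA LX) (fLA LY)).
rewrite -fW; apply/(fle LXY LW); rewrite subv_cap; apply/andP; split.
  by apply/(fle LX LW); rewrite fW capvSl.
by apply/(fle LY LW); rewrite fW capvSr.
Qed.

Lemma f_neq X : LC X -> X != fullv -> f X != fullv.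
Proof. by move=> LX; apply: contra => /eqP h; apply/eqP/finj => //; rewrite ?h ?f_full //; exact: LCf. Qed.

Lemma C_neq c : c \in C -> c != fullv.
Proof. by move=> cC; apply: full_neq => //; apply: Carr. Qed.

Lemma fC H X : H \in AG e -> LC X -> f X = H -> X \in C.
Proof.
move=> HA LX fXH.
have XT : X != fullv.
  by apply/eqP => XT; move: (dimA HA); rewrite -fXH XT f_full dimQn; lia.
case: (LX) => B [BC XB].
case: (fset_0Vmem B) => [B0|[c cB]].
  by move: XT; rewrite XB B0 big_seq_fset0 eqxx.
have cC := BC _ cB; have Lc : LC c by apply: inL_mem.
have Xc : (X <= c)%VS by rewrite XB; apply/subvP => w /memcapP; apply.
have : f X = f c.
  rewrite fXH; apply: (hyp_eq _ (dimA HA) (f_neq Lc (C_neq cC))); rewrite -fXH; exact/(fle Lc LX).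
by move/(finj LX Lc) => ->.
Qed.

Lemma fA c : c \in C -> f c \in AG e.
Proof.
move=> cC; have Lc : LC c by apply: inL_mem.
have fT := f_neq Lc (C_neq cC).
case: (fLA Lc) => B [BA fB].
case: (fset_0Vmem B) => [B0|[h hB]].
  by move: fT; rewrite fB B0 big_seq_fset0 eqxx.
have hA := BA _ hB.
have [X LX fX] := fsurj (inL_mem (P := fun H => H \in AG e) hA).
have cX : (c <= X)%VS.
  by apply/(fle LX Lc); rewrite fX fB; apply/subvP => w /memcapP; apply.
have XT : X != fullv.
  by apply: contraTneq hA => XT; rewrite -fX XT f_full; apply/negP => /dimA; rewrite dimQn; lia.
by rewrite (hyp_eq cX (Carr cC) XT) fX.
Qed.

Lemma f_bigcap (s : seq (subsp n)) : (forall X, X \in s -> LC X) ->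
  LC (\bigcap_(X <- s) X)%VS /\ f (\bigcap_(X <- s) X)%VS = (\bigcap_(X <- s) f X)%VS.
Proof.
elim: s => [|X s IH] hs; first by rewrite !big_nil f_full; split => //; exact: LCf.
have [Ls fs] := IH (fun Y Ys => hs Y (mem_behead (s := X :: s) Ys)).
have LX := hs X (mem_head X s).
by rewrite !big_cons f_cap // fs; split => //; apply: inL_cap.
Qed.


Let S := [fset HI [set i] | i in 'I_n] `|` [fset HI [set: 'I_n]].

Lemma sub_bigsumF (s : seq (subsp n)) (F : subsp n -> subsp n) V :
  (forall Y, Y \in s -> (F Y <= V)%VS) -> (\sum_(Y <- s) F Y <= V)%VS.
Proof.
elim: s => [|Y s IH] h; rewrite ?big_nil ?sub0v // big_cons subv_add.
by rewrite h ?mem_head // IH // => Z Zs; apply: h; rewrite inE Zs orbT.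
Qed.

Lemma mem_bigcapF (T : Type) (s : seq T) (F : T -> subsp n) w :
  (w \in \bigcap_(X <- s) F X)%VS = all (fun X => w \in F X) s.
Proof. elim: s => [|X s IH]; rewrite ?big_nil ?memvf // big_cons memv_cap IH //. Qed.

Lemma proj_part : exists2 M : 'M[rat]_n, M \in unitmx & C = mx_image M (AG e).
Proof.
have Kex : forall i : 'I_n, exists X, LC X /\ f X = HI [set i].
  move=> i; have [X LX fX] := fsurj (inL_mem (P := fun H => H \in AG e) (memAG (conn1 e i))).
  by exists X.
have [K HK] := fin_all_exists Kex.
have LK i : LC (K i) := (HK i).1.
have fK i : f (K i) = HI [set i] := (HK i).2.
have [K0 LK0 fK0] := fsurj (inL_mem (P := fun H => H \in AG e) (memAG (connT n0 gc))).
have KC i : K i \in C := fC (memAG (conn1 e i)) (LK i) (fK i).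
have K0C : K0 \in C := fC (memAG (connT n0 gc)) LK0 fK0.
have aex : forall i, exists a : 'cV[rat]_n, forall w, (w \in K i) = ((w *m a) 0 0 == 0).
  by move=> i; apply: hyper_form n0 (Carr (KC i)).
have [a Ha] := fin_all_exists aex.
have [a0 Ha0] := hyper_form n0 (Carr K0C).
pose Zs (T : {set 'I_n}) := (\bigcap_(X <- [seq K i | i <- enum T]) X)%VS.
have LZ T : LC (Zs T) /\ f (Zs T) = (\bigcap_(X <- [seq K i | i <- enum T]) f X)%VS.
  by apply: f_bigcap => X /mapP [i _ ->].
have memZ T w : (w \in Zs T) = [forall i in T, w \in K i].
  rewrite mem_bigcap all_map; apply/allP/forallP => h i.
    by apply/implyP => iT; apply: h; rewrite mem_enum.
  by rewrite mem_enum => iT; exact: (implyP (h i)).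
have memfZ T w : (w \in f (Zs T)) = [forall i in T, w 0 i == 0].
  rewrite (LZ T).2 mem_bigcapF all_map; apply/allP/forallP => h i.
    apply/implyP => iT; have hi : w \in f (K i) by apply: (h i); rewrite mem_enum.
    by move: hi; rewrite fK (memHE i w).
  rewrite mem_enum => iT; change (w \in f (K i)); rewrite fK (memHE i w); exact: (implyP (h i) iT).
have chain : forall k, (k <= n)%N -> (\dim (Zs [set i : 'I_n | (i < k)%N]) + k <= n)%N.
  elim => [_|k IH kn].
    by rewrite addn0; apply: leq_trans (dimvS (subvf _)) _; rewrite dimQn.
  set T := [set i : 'I_n | (i < k)%N]; set T' := [set i : 'I_n | (i < k.+1)%N].
  have sub : (Zs T' <= Zs T)%VS.
    apply/subvP => w; rewrite !memZ => /forallP h; apply/forallP => i; apply/implyP => iT.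
    by apply: (implyP (h i)); move: iT; rewrite !inE; lia.
  have neq : Zs T' != Zs T.
    apply/eqP => eqZ; pose i0 := Ordinal kn.
    have : delta_mx 0 i0 \in f (Zs T).
      rewrite memfZ; apply/forallP => i; apply/implyP; rewrite inE => ik.
      have ne : (i == i0) = false by apply/negbTE/eqP => ii; move: ik; rewrite ii /=; lia.
      by rewrite mxE ne andbF.
    rewrite -eqZ memfZ => /forallP /(_ i0); rewrite inE /= ltnSn /= mxE !eqxx; done.
  have := ltn_leqif (dimv_leqif_eq sub); rewrite neq => /idP lt.
  have := IH (ltnW kn); rewrite -/T => h.
  move: lt h; set x := \dim (Zs T'); set y := \dim (Zs T); lia.
have Z0 : forall w, (forall i, w \in K i) -> w = 0.
  move=> w hw.
  have : Zs [set i : 'I_n | (i < n)%N] = 0%VS.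
    by apply/eqP; rewrite -dimv_eq0; have := chain n (leqnn n); lia.
  move=> Zn0; apply/eqP; rewrite -memv0 -Zn0 memZ; apply/forallP => i; apply/implyP => _; exact: hw.
pose P := \matrix_(j, i) a i j 0 : 'M[rat]_n.
have Pcol w i : (w *m P) 0 i = (w *m a i) 0 0.
  by rewrite !mxE; apply: eq_bigr => j _; rewrite !mxE.
have Punit : P \in unitmx.
  rewrite unitmxE unitfE; apply/negP => /det0P [v v0 vP]; move: v0.
  by rewrite (Z0 v) ?eqxx // => i; rewrite Ha -Pcol vP mxE.
pose T := invmx P *m a0.
have c0E w : (w *m a0) 0 0 = \sum_i (w *m P) 0 i * T i 0.
  have -> : w *m a0 = w *m P *m T by rewrite /T mulmxA mulmxK.
  by rewrite mxE.
have Tnz : forall i, T i 0 != 0.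
  move=> i; apply/negP => /eqP Ti.
  pose W := Zs [set j | j != i].
  have LW : LC W := (LZ _).1.
  have WK0 : (W <= K0)%VS.
    apply/subvP => w; rewrite memZ => /forallP hw; rewrite Ha0 c0E (bigD1 i) //= Ti mulr0 add0r.
    rewrite big1 // => j ji; rewrite Pcol.
    have := implyP (hw j); rewrite inE ji => /(_ isT); rewrite Ha => /eqP ->; by rewrite mul0r.
  have := f_cap LW LK0; rewrite (capv_idPl WK0) fK0 => h.
  have : delta_mx 0 i \in f W.
    rewrite memfZ; apply/forallP => j; apply/implyP; rewrite inE => ji.
    by rewrite mxE (negbTE ji) andbF.
  rewrite h memv_cap => /andP[_]; rewrite memHI (big_setD1 i (in_setT i)) /= mxE !eqxx /=.
  rewrite big1 ?addr0 ?oner_eq0 // => j; rewrite in_setD1 => /andP[ji _].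
  by rewrite mxE (negbTE ji) andbF.
pose d := \row_i T i 0.
pose Q := P *m diag_mx d.
have Qcol w i : (w *m Q) 0 i = (w *m a i) 0 0 * T i 0.
  rewrite /Q mulmxA mul_mx_diag mxE; congr (_ * _); [exact: Pcol | by rewrite mxE].
have Qunit : Q \in unitmx.
  rewrite unitmx_mul Punit /= unitmxE det_diag unitfE; apply/prodf_neq0 => i _.
  by rewrite mxE.
pose M := invmx Q.
have Munit : M \in unitmx by rewrite unitmx_inv.
have linM u : linfun (fun v : Qn n => v *m M) u = u *m M := lfunE (mulmxr M) u.
pose phi (U : subsp n) := (linfun (fun v : Qn n => v *m M) @: U)%VS.
have memphi U w : (w \in phi U) = (w *m Q \in U).
  apply/memv_imgP/idP => [[u uU ->]|wU]; first by rewrite linM /M mulmxKV.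
  by exists (w *m Q) => //; rewrite linM /M mulmxK.
have phiE i : phi (HI [set i]) = K i.
  apply/vspaceP => w; rewrite memphi (memHE i) Qcol Ha mulf_eq0 (negbTE (Tnz i)) orbF //.
have phiN : phi (HI [set: 'I_n]) = K0.
  apply/vspaceP => w; rewrite memphi memHI Ha0 c0E.
  congr (_ == 0); rewrite (eq_bigl (fun _ => true)) => [|i]; last by rewrite in_setT.
  by apply: eq_bigr => i _; rewrite Qcol Pcol.
have phi_cap U V : phi (U :&: V)%VS = (phi U :&: phi V)%VS.
  by apply/vspaceP => w; rewrite memv_cap !memphi memv_cap.
have phi_full : phi fullv = fullv by apply/vspaceP => w; rewrite memphi !memvf.
have phi_bigcap (s : seq (subsp n)) : phi (\bigcap_(X <- s) X)%VS = (\bigcap_(X <- s) phi X)%VS.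
  elim: s => [|X s IH]; first by rewrite !big_nil.
  by rewrite !big_cons phi_cap IH.
have phi_dim U : \dim (phi U) = \dim U.
  apply: limg_dim_eq; apply/eqP; rewrite -subv0; apply/subvP => w; rewrite memv_cap => /andP[_].
  rewrite memv_ker memv0 linM => /eqP h.
  by rewrite -[w](mulmxKV Qunit) -/M h mul0mx.
have GA k H : Gen (AG e) S k H -> H \in AG e by apply: Gen_A; exact: S_sub n0 gc.
have flat k : (forall H, Gen (AG e) S k H -> forall X, LC X -> f X = H -> X = phi H) ->
    forall Y, inL (Gen (AG e) S k) Y -> forall X, LC X -> f X = Y -> X = phi Y.
  move=> hk Y [B [BG ->]] X LX fX.
  have hB : forall H, H \in B -> LC (phi H) /\ f (phi H) = H.
    move=> H HB; have HA := GA _ _ (BG _ HB).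
    have [X' LX' fX'] := fsurj (inL_mem (P := fun H => H \in AG e) HA).
    by have <- := hk H (BG _ HB) X' LX' fX'.
  have [Ls fs] := f_bigcap (s := [seq phi H | H <- B]) (fun Z hZ => match mapP hZ with ex_intro2 H HB eq => eq_ind_r _ (hB H HB).1 eq end).
  have -> : phi (\bigcap_(H <- B) H)%VS = (\bigcap_(Z <- [seq phi H | H <- B]) Z)%VS.
    by rewrite phi_bigcap big_map.
  apply: finj LX Ls _; rewrite fX fs big_map; apply: eq_big_seq => H HB.
  by rewrite (hB H HB).2.
have main k : forall H, Gen (AG e) S k H -> forall X, LC X -> f X = H -> X = phi H.
  elim: k => [|k IH] H.
    rewrite /= in_fsetU => /orP[/imfsetP [i _ ->]|].
      by move=> X LX fX; rewrite phiE; apply: finj LX (LK i) _; rewrite fX fK.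
    by rewrite in_fset1 => /eqP -> X LX fX; rewrite phiN; apply: finj LX LK0 _; rewrite fX fK0.
  case => HA [J [JL HJ]] X LX fX.
  have XC := fC HA LX fX.
  have sub : (phi H <= X)%VS.
    rewrite HJ /phi limg_sum; apply: sub_bigsumF => Y YJ.
    have [XY LXY fXY] := fsurj (inL_sub (Q := fun H => H \in AG e) (fun H h => GA _ _ h) (JL _ YJ)).
    rewrite -/(phi Y) -(flat k IH Y (JL Y YJ) XY LXY fXY).
    apply/(fle LX LXY); rewrite fXY fX HJ; exact: bigsum_sup.
  apply/esym/hyp_eq => //; first by rewrite phi_dim; exact: dimA.
  exact: C_neq.
exists M => //.
apply/fsetP => c; apply/idP/idP.
  move=> cC; have fcA := fA cC; have [k Gk] := (part1 n0 sg gc _).2 fcA.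
  have -> := main k _ Gk c (inL_mem (P := fun H => H \in C) cC) erefl.
  by apply/imfsetP; exists (f c).
case/imfsetP => h /= hA ->.
have [X LX fX] := fsurj (inL_mem (P := fun H => H \in AG e) hA).
have [k Gk] := (part1 n0 sg gc _).2 hA.
rewrite -/(phi h) -(main k h Gk X LX fX).
exact: fC hA LX fX.
Qed.

End Iso.


Unset Implicit Arguments.

Theorem mainTheorem4 (n : nat) (e : rel 'I_n) :
  (0 < n)%N -> simple_graph e -> graph_connected e ->
  let S := [fset HI [set i] | i in 'I_n] `|` [fset HI [set: 'I_n]] in
  (forall H, generated (AG e) S H <-> H \in AG e) /\ proj_unique (AG e).
Proof.
move=> n0 sg gc S; split; first exact: part1 n0 sg gc.
move=> C Carr [f [fLA finj fsurj fle]].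
exact: (proj_part n0 sg gc Carr fLA finj fsurj fle).
Qed.
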